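(* Consider instances with indivisible items. There is no (possibly randomized) mechanism $M$ that is individually rational, truthful in expectation and budget feasible in expectation, together with constants $\alpha>1-1/e$ and $\theta_0>0$, such that on every instance with $c_{\max}/B\le\theta_0$ the expected utility of $M$ is at least $\alpha U^\star$. That is, no such mechanism achieves a (large-market) approximation ratio better than $1-1/e$.
   Context: A buyer with budget $B>0$ faces a finite set $S$ of sellers; seller $i$ owns one indivisible item giving the buyer utility $u_i>0$ and has a private cost $c_i\ge0$; $c_{\max}=\max_i c_i$. $U^\star=\max\{\sum_{i\in T}u_i: T\subseteq S,\ \sum_{i\in T}c_i\le B\}$. A randomized mechanism maps the reported cost vector to a random set of winners $W\subseteq S$ and random payments $p_i\ge0$. It is truthful in expectation if for every seller $i$, every true cost $c_i$, every report $\bar c_i$ and every reports $c_{-i}$ of the others, $\mathbb E[p_i-c_i\mathbf 1[i\in W]]$ under report $(\bar c_i,c_{-i})$ is at most its value under $(c_i,c_{-i})$; individually rational in expectation if $\mathbb E[p_i]\ge c_i\Pr[i\in W]$ under truthful reports; budget feasible in expectation if $\mathbb E[\sum_i p_i]\le B$. Its utility is $\sum_{i\in W}u_i$. *)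

(* Defs.v *)
From HB Require Import structures.
From mathcomp Require Import all_boot all_order all_algebra.
From mathcomp Require Import reals sequences exp.
Set Implicit Arguments. Unset Strict Implicit. Unset Printing Implicit Defensive.
Import Order.TTheory GRing.Theory Num.Theory.
Local Open Scope ring_scope.

Definition outcome (R : eqType) (n : nat) : Type := ({set 'I_n} * {ffun 'I_n -> R})%type.

(* A randomized outcome: finitely supported distribution over outcomes,
   given as a list of (probability, outcome). *)
Definition lottery (R : eqType) (n : nat) : Type := seq (R * outcome R n).

(* A (randomized) mechanism: given the public instance data
   (number of sellers n, budget B, utilities u) and the reported cost
   vector, returns a random outcome. *)
Definition mechanism (R : eqType) : Type :=
  forall n : nat, R -> ('I_n -> R) -> ('I_n -> R) -> lottery R n.

Section Defs.
Variable R : realType.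

Definition valid_lottery (n : nat) (L : lottery R n) : Prop :=
  (forall o, o \in L -> 0 <= o.1) /\ \sum_(o <- L) o.1 = 1 /\
  (forall o, o \in L -> forall i, 0 <= o.2.2 i).

Definition Exp (n : nat) (L : lottery R n) (f : outcome R n -> R) : R :=
  \sum_(o <- L) o.1 * f o.2.

Definition ind (b : bool) : R := if b then 1 else 0.

Definition upd (n : nat) (c : 'I_n -> R) (i : 'I_n) (x : R) : 'I_n -> R :=
  fun j => if j == i then x else c j.

Definition nonneg_vec (n : nat) (c : 'I_n -> R) : Prop := forall i, 0 <= c i.
Definition pos_vec (n : nat) (u : 'I_n -> R) : Prop := forall i, 0 < u i.

Definition seller_util (n : nat) (L : lottery R n) (i : 'I_n) (ci : R) : R :=
  Exp L (fun o => o.2 i - ci * ind (i \in o.1)).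

Definition is_randomized_mech (M : mechanism R) : Prop :=
  forall n B u c, 0 < B -> pos_vec u -> nonneg_vec c -> valid_lottery (M n B u c).

Definition truthful_in_expectation (M : mechanism R) : Prop :=
  forall n B u (c : 'I_n -> R) (i : 'I_n) (cbar : R),
    0 < B -> pos_vec u -> nonneg_vec c -> 0 <= cbar ->
    seller_util (M n B u (upd c i cbar)) i (c i) <= seller_util (M n B u c) i (c i).

Definition individually_rational_in_expectation (M : mechanism R) : Prop :=
  forall n B u (c : 'I_n -> R) (i : 'I_n),
    0 < B -> pos_vec u -> nonneg_vec c ->
    c i * Exp (M n B u c) (fun o => ind (i \in o.1)) <= Exp (M n B u c) (fun o => o.2 i).

Definition budget_feasible_in_expectation (M : mechanism R) : Prop :=
  forall n B u (c : 'I_n -> R),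
    0 < B -> pos_vec u -> nonneg_vec c ->
    Exp (M n B u c) (fun o => \sum_i o.2 i) <= B.

Definition exp_utility (M : mechanism R) n B (u c : 'I_n -> R) : R :=
  Exp (M n B u c) (fun o => \sum_(i in o.1) u i).

(* U* = max { sum_{i in T} u_i : sum_{i in T} c_i <= B }; the empty set is
   feasible and utilities are positive, so folding max from 0 is exact. *)
Definition Ustar n (B : R) (u c : 'I_n -> R) : R :=
  \big[Num.max/0]_(T : {set 'I_n} | \sum_(i in T) c i <= B) \sum_(i in T) u i.

(* c_max = max_i c_i (0 for no sellers; costs are nonnegative). *)
Definition cmax n (c : 'I_n -> R) : R := \big[Num.max/0]_i c i.

End Defs.

(* Main.v *)
Require Import Defs.
From HB Require Import structures.
From mathcomp Require Import all_boot all_order all_algebra.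
From mathcomp Require Import reals sequences exp boolp.
From mathcomp Require Import ring lra.
Import Order.TTheory GRing.Theory Num.Theory.
Local Open Scope ring_scope.

Lemma chain_lemma (R : realFieldType) (m : nat) (t q Q P X : nat -> R) (mu : R) :
  0 <= mu -> t 0%N = 0 -> Q 0%N = q 0%N -> (forall k, Q k.+1 = Q k + q k.+1) ->
  (forall k, 0 <= Q k) ->
  (forall k, q k.+1 = mu * (Q k.+1 * t k.+1 - Q k * t k)) ->
  (forall k, (k < m)%N -> P k.+1 - t k * X k.+1 <= P k - t k * X k) ->
  t m * X m <= P m -> 0 <= q 0%N -> X 0%N <= 1 ->
  \sum_(k < m.+1) q k * X k <= q 0%N + mu * \sum_(k < m.+1) q k * P k.
Proof.
move=> mu0 t0 Q0 QS Qge0 qS tru ir q00 X01.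
have claim : forall j, (j <= m)%N ->
  \sum_(k < j.+1) q k * X k - q 0%N * X 0%N + mu * (Q j * (P j - t j * X j))
   <= mu * \sum_(k < j.+1) q k * P k.
  elim=> [|j IH] Hj.
    rewrite big_ord_recr big_ord0 /= big_ord_recr big_ord0 /= t0 Q0. lra.
  have IH' := IH (ltnW Hj).
  have tj := tru j Hj.
  rewrite big_ord_recr /= [X in _ <= mu * X]big_ord_recr /=.
  have h1 : mu * (Q j * (P j.+1 - t j * X j.+1)) <= mu * (Q j * (P j - t j * X j)).
    by apply: ler_wpM2l => //; apply: ler_wpM2l.
  have E : q j.+1 * X j.+1 + mu * (Q j.+1 * (P j.+1 - t j.+1 * X j.+1)) =
           mu * (q j.+1 * P j.+1) + mu * (Q j * (P j.+1 - t j * X j.+1)).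
    rewrite [in LHS]qS !QS; ring.
  rewrite mulrDr.
  lra.
have := claim m (leqnn m).
have h2 : 0 <= mu * (Q m * (P m - t m * X m)).
  apply: mulr_ge0 => //; apply: mulr_ge0 => //; lra.
have h3 : q 0%N * X 0%N <= q 0%N by rewrite -[X in _ <= X]mulr1; apply: ler_wpM2l.
lra.
Qed.


Section Prob.
Variables (R : realFieldType) (n : nat) (I : finType) (q : I -> R).
Hypothesis q1 : \sum_k q k = 1.

Definition setf (f : {ffun 'I_n -> I}) (i : 'I_n) (k : I) : {ffun 'I_n -> I} :=
  [ffun j => if j == i then k else f j].
Definition wt (f : {ffun 'I_n -> I}) : R := \prod_i q (f i).
Definition EE (h : {ffun 'I_n -> I} -> R) : R := \sum_f wt f * h f.

Lemma setfK f i k : setf (setf f i k) i (f i) = f.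
Proof. by apply/ffunP=> j; rewrite !ffunE; case: eqP => // ->. Qed.
Lemma setf_i f i k : setf f i k i = k.
Proof. by rewrite ffunE eqxx. Qed.
Lemma setf_j f i k j : j != i -> setf f i k j = f j.
Proof. by rewrite ffunE => /negbTE ->. Qed.

Lemma wt_split f i : wt f = q (f i) * \prod_(j | j != i) q (f j).
Proof. by rewrite /wt (bigD1 i). Qed.

Lemma wt_setf f i k : wt (setf f i k) * q (f i) = q k * wt f.
Proof.
rewrite (wt_split _ i) setf_i (wt_split f i).
rewrite (eq_bigr (fun j => q (f j))); last by move=> j /setf_j ->.
by ring.
Qed.

Lemma KEY (i : 'I_n) (h : {ffun 'I_n -> I} -> R) :
  EE h = \sum_k q k * EE (fun f => h (setf f i k)).
Proof.
rewrite /EE; symmetry.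
under eq_bigr do rewrite mulr_sumr.
rewrite exchange_big /= pair_bigA /=.
pose phi (p : {ffun 'I_n -> I} * I) := (setf p.1 i p.2, p.1 i).
have phiK : involutive phi.
  by case=> g k; rewrite /phi /= setfK setf_i.
rewrite (reindex_inj (inv_inj phiK)) /=.
transitivity (\sum_(p : {ffun 'I_n -> I} * I) q p.2 * (wt p.1 * h p.1)); last first.
  rewrite -(pair_bigA _ (fun g k => q k * (wt g * h g))) /=.
  rewrite (eq_bigr (fun g => wt g * h g * \sum_k q k)); last first.
    by move=> g _; rewrite mulr_sumr; apply: eq_bigr => k _; rewrite mulrC.
  by rewrite -big_distrl /= q1 mulr1.
apply: eq_bigr => [[g k]] _ /=.
rewrite setfK mulrA [q (g i) * _]mulrC wt_setf; ring.
Qed.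

Lemma EE1 : EE (fun _ => 1) = 1.
Proof.
rewrite /EE. under eq_bigr do rewrite mulr1.
rewrite /wt -(bigA_distr_bigA (fun (_ : 'I_n) k => q k)) /=.
by rewrite (eq_bigr (fun _ => 1)) ?prodr_const ?expr1n // => ? _; rewrite q1.
Qed.

Hypothesis q0 : forall k, 0 <= q k.

Lemma wt_ge0 f : 0 <= wt f.
Proof. by apply: prodr_ge0 => i _. Qed.

Lemma EE_ext h1 h2 : (forall f, h1 f = h2 f) -> EE h1 = EE h2.
Proof. by move=> H; apply: eq_bigr => f _; rewrite H. Qed.
Lemma EE_le h1 h2 : (forall f, h1 f <= h2 f) -> EE h1 <= EE h2.
Proof. by move=> H; apply: ler_sum => f _; apply: ler_wpM2l; [apply: wt_ge0|]. Qed.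
Lemma EED h1 h2 : EE (fun f => h1 f + h2 f) = EE h1 + EE h2.
Proof. by rewrite /EE -big_split /=; apply: eq_bigr => f _; rewrite mulrDr. Qed.
Lemma EEZ c h : EE (fun f => c * h f) = c * EE h.
Proof. by rewrite /EE mulr_sumr; apply: eq_bigr => f _; rewrite mulrCA. Qed.
Lemma EEC c : EE (fun _ => c) = c.
Proof. by rewrite -[c]mulr1 (EEZ c (fun _ => 1)) EE1. Qed.
Lemma EE_sum (J : finType) (h : J -> {ffun 'I_n -> I} -> R) :
  EE (fun f => \sum_j h j f) = \sum_j EE (h j).
Proof.
rewrite /EE; under eq_bigr do rewrite mulr_sumr.
by rewrite exchange_big.
Qed.
Lemma EEB h1 h2 : EE (fun f => h1 f - h2 f) = EE h1 - EE h2.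
Proof.
rewrite (EE_ext _ (fun f => h1 f + (-1) * h2 f)); last by move=> f; ring.
by rewrite EED EEZ; ring.
Qed.

Variable tc : I -> R.
Hypothesis tc01 : forall k, 0 <= tc k <= 1.
Definition Ec := \sum_k q k * tc k.

Lemma Ec01 : 0 <= Ec <= 1.
Proof.
apply/andP; split.
  by apply: sumr_ge0 => k _; apply: mulr_ge0 => //; case/andP: (tc01 k).
rewrite -q1; apply: ler_sum => k _.
by rewrite -[X in _ <= X]mulr1; apply: ler_wpM2l => //; case/andP: (tc01 k).
Qed.

Definition dd (i : 'I_n) (f : {ffun 'I_n -> I}) := tc (f i) - Ec.

Lemma EE_fun_i (i : 'I_n) (g : I -> R) : EE (fun f => g (f i)) = \sum_k q k * g k.
Proof.
rewrite (KEY i); apply: eq_bigr => k _.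
by rewrite (EE_ext _ (fun _ => g k)) ?EEC // => f; rewrite setf_i.
Qed.

Lemma EE_dd i : EE (dd i) = 0.
Proof.
rewrite /dd EEB EEC (EE_fun_i i tc) -/Ec. by rewrite subrr.
Qed.

Lemma EE_dd2 i j : i != j -> EE (fun f => dd i f * dd j f) = 0.
Proof.
move=> ij; rewrite (KEY i).
rewrite (eq_bigr (fun k => q k * ((tc k - Ec) * EE (dd j)))); last first.
  move=> k _; congr (_ * _); rewrite -EEZ; apply: EE_ext => f.
  by rewrite /dd setf_i setf_j // eq_sym.
by rewrite EE_dd big1 // => k _; rewrite !mulr0.
Qed.

Lemma variance :
  EE (fun f => (\sum_i tc (f i) - n%:R * Ec) ^+ 2) <= n%:R.
Proof.
have E1 : forall f : {ffun 'I_n -> I}, (\sum_i tc (f i) - n%:R * Ec) ^+ 2 = \sum_i \sum_j dd i f * dd j f.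
  move=> f; rewrite expr2.
  have -> : \sum_i tc (f i) - n%:R * Ec = \sum_i dd i f.
    rewrite /dd sumrB; congr (_ - _).
    by rewrite sumr_const card_ord mulr_natl.
  rewrite mulr_suml; apply: eq_bigr => i _; by rewrite mulr_sumr.
rewrite (EE_ext _ _ E1) EE_sum.
rewrite (_ : n%:R = \sum_(i < n) (1:R)); last by rewrite sumr_const card_ord.
apply: ler_sum => i _; rewrite EE_sum (bigD1 i) //= big1; last first.
  by move=> j ji; apply: EE_dd2; rewrite eq_sym.
rewrite addr0 -EE1; apply: EE_le => f.
rewrite /dd; have := tc01 (f i); have := Ec01; move=> /andP[? ?] /andP[? ?].
nra.
Qed.

End Prob.


Section Grid.
Variables (R : realType) (m : nat).
Hypothesis m0 : (0 < m)%N.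

Definition Qg (k : nat) : R := expR (k%:R / m%:R - 1).
Definition qg (k : nat) : R := if k is k'.+1 then Qg k - Qg k' else Qg 0.
Definition tg (k : nat) : R := (1 - expR (- (k%:R / m%:R))) / (1 - expR (-1)).
Definition mu : R := 1 - expR (-1).

Lemma em1_lt1 : expR (-1) < (1:R).
Proof. rewrite -[X in _ < X]expR0 ltr_expR; lra. Qed.
Lemma em1_gt0 : 0 < expR (-1) :> R.
Proof. exact: expR_gt0. Qed.
Lemma mu_gt0 : 0 < mu.
Proof. rewrite /mu; have := em1_lt1; lra. Qed.

Lemma Qg_ge0 k : 0 <= Qg k.
Proof. exact/ltW/expR_gt0. Qed.

Lemma Qg_le k : Qg k <= Qg k.+1.
Proof.
rewrite /Qg ler_expR lerD2r ler_pM2r ?invr_gt0 ?ltr0n // ler_nat; exact: leqnSn.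
Qed.

Lemma qg_ge0 k : 0 <= qg k.
Proof. case: k => [|k] /=; first exact: Qg_ge0. by have := Qg_le k; lra. Qed.

Lemma QgS k : Qg k.+1 = Qg k + qg k.+1.
Proof. rewrite /=; ring. Qed.

Lemma Qg0 : Qg 0 = qg 0.
Proof. by []. Qed.

Lemma tg0 : tg 0 = 0.
Proof. by rewrite /tg mul0r oppr0 expR0 subrr mul0r. Qed.

Lemma mu_tg k : mu * tg k = 1 - expR (- (k%:R / m%:R)).
Proof. rewrite /tg /mu mulrC -mulrA mulVf ?mulr1 //; have := mu_gt0; rewrite /mu; lra. Qed.

Lemma Qg_tg k : mu * (Qg k * tg k) = Qg k - expR (-1).
Proof.
rewrite mulrCA mu_tg mulrBr mulr1 /Qg -expRD; congr (_ - expR _); ring.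
Qed.

Lemma qg_id k : qg k.+1 = mu * (Qg k.+1 * tg k.+1 - Qg k * tg k).
Proof. rewrite mulrBr !Qg_tg /=; ring. Qed.

Lemma sum_qg j : \sum_(k < j.+1) qg k = Qg j.
Proof.
elim: j => [|j IH]; first by rewrite big_ord_recr big_ord0 /= add0r.
by rewrite big_ord_recr /= IH; ring.
Qed.

Lemma sum_qg1 : \sum_(k < m.+1) qg k = 1.
Proof. by rewrite sum_qg /Qg divff ?subrr ?expR0 // pnatr_eq0 -lt0n. Qed.

Lemma tg01 k : (k <= m)%N -> 0 <= tg k <= 1.
Proof.
move=> km; have mu0 := mu_gt0.
have h1 : 0 <= k%:R / m%:R :> R by apply: divr_ge0; apply: ler0n.
have h2 : k%:R / m%:R <= 1 :> R.
  by rewrite ler_pdivrMr ?ltr0n // mul1r ler_nat.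
have e1 : expR (- (k%:R / m%:R)) <= 1 :> R by rewrite -[X in _ <= X]expR0 ler_expR; lra.
have e2 : expR (-1) <= expR (- (k%:R / m%:R)) :> R by rewrite ler_expR; lra.
rewrite /tg; apply/andP; split.
  apply: divr_ge0; [lra | rewrite /mu in mu0; lra].
rewrite ler_pdivrMr; last by rewrite /mu in mu0.
lra.
Qed.

Lemma em1m : expR (- (1 / m%:R)) <= 1 - 1 / (m.+1)%:R :> R.
Proof.
have mp : 0 < m%:R :> R by rewrite ltr0n.
have h := expR_ge1Dx (1 / m%:R : R).
have EF : expR (- (1 / m%:R)) * expR (1 / m%:R) = 1 :> R.
  by rewrite -expRD addNr expR0.
have key : (1 - 1 / (m.+1)%:R) * (1 + 1 / m%:R) = 1 :> R.
  rewrite -addn1 natrD; field.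
  by apply/andP; split; apply: lt0r_neq0; lra.
have a0 : 0 < 1 + 1 / m%:R :> R.
  have : 0 < 1 / m%:R :> R by rewrite divr_gt0.
  lra.
have ep : 0 < expR (- (1 / m%:R)) :> R by apply: expR_gt0.
set E := expR (- (1 / m%:R)) in EF ep *; set F := expR (1 / m%:R) in h EF *; set b := 1 / (m.+1)%:R in key *; set a := 1 / m%:R in h key a0 *.
clearbody E F b a. nra.
Qed.

Lemma rho_bound :
  qg 0 + mu * \sum_(k < m.+1) qg k * tg k <= 1 - expR (-1) + 1 / (m.+1)%:R.
Proof.
rewrite big_ord_recl /= tg0 mulr0 add0r mulr_sumr.
have step : forall j : nat, mu * (qg j.+1 * tg j.+1) <= qg j.+1 - expR (-1) / (m.+1)%:R.
  move=> j.
  have E1 : mu * (qg j.+1 * tg j.+1) = qg j.+1 - expR (-1) * (1 - expR (- (1 / m%:R))).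
    rewrite mulrCA mu_tg.
    have A1 : Qg j.+1 * expR (- (j.+1%:R / m%:R)) = expR (-1).
      rewrite /Qg -expRD; congr expR; ring.
    have A2 : Qg j * expR (- (j.+1%:R / m%:R)) = expR (-1) * expR (- (1 / m%:R)).
      rewrite /Qg -!expRD; congr expR.
      by rewrite -addn1 natrD; field; rewrite pnatr_eq0 -lt0n.
    rewrite [qg _]/= mulrBl !mulrBr !mulr1 A1 A2; ring.
  rewrite E1; have := em1m; have := em1_gt0.
  move=> e0 em.
  set E := expR (- (1 / m%:R)) in em *; set e := expR (-1) in e0 *.
  set b := 1 / (m.+1)%:R in em *.
  rewrite (_ : e / (m.+1)%:R = e * b); last by rewrite /b mul1r. nra.
apply: le_trans (_ : Qg 0 + \sum_(i < m) (qg (lift ord0 i) - expR (-1) / (m.+1)%:R) <= _).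
  by rewrite lerD2l; apply: ler_sum => i _; rewrite lift0; apply: step.
rewrite sumrB.
have -> : \sum_(i < m) qg (lift ord0 i) = 1 - Qg 0.
  rewrite -sum_qg1 big_ord_recl /=; ring.
rewrite sumr_const card_ord.
have -> : expR (-1) / (m.+1)%:R *+ m = expR (-1) * (m%:R / (m.+1)%:R) :> R.
  by rewrite -mulr_natl; ring.
have -> : m%:R / (m.+1)%:R = 1 - 1 / (m.+1)%:R :> R.
  have : (0:R) <= m%:R by apply: ler0n.
  by rewrite -addn1 natrD => ?; field; apply: lt0r_neq0; lra.
have : (0:R) <= 1 / (m.+1)%:R by rewrite mul1r invr_ge0 ler0n.
have := em1_lt1; have := em1_gt0.
have -> : Qg 0 = expR (-1) by rewrite /Qg mul0r add0r.
set e := expR (-1); set b := 1 / (m.+1)%:R. nra.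
Qed.

End Grid.


Section ExpLemmas.
Variable R : realType.
Variable n : nat.
Implicit Type L : lottery R n.

Lemma Exp_lin L f g a : Exp L (fun o => f o - a * g o) = Exp L f - a * Exp L g.
Proof. rewrite /Exp mulr_sumr -sumrB; apply: eq_bigr => o _; ring. Qed.

Lemma Exp_sum L (F : 'I_n -> outcome R n -> R) :
  Exp L (fun o => \sum_i F i o) = \sum_i Exp L (F i).
Proof.
rewrite /Exp; under eq_bigr do rewrite mulr_sumr.
by rewrite exchange_big.
Qed.

Lemma Exp_le L f g : valid_lottery L -> (forall o, f o <= g o) -> Exp L f <= Exp L g.
Proof.
case=> [p0 _] H; rewrite /Exp big_seq [X in _ <= X]big_seq; apply: ler_sum => o oL.
by apply: ler_wpM2l; [apply: p0|].
Qed.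

Lemma Exp_cst L a : valid_lottery L -> Exp L (fun _ => a) = a.
Proof. by case=> [_ [p1 _]]; rewrite /Exp -mulr_suml p1 mul1r. Qed.

Lemma ind01 b : 0 <= ind R b <= 1.
Proof. by case: b; rewrite /ind /= ?lexx ?ler01. Qed.

End ExpLemmas.

Section Mech.
Variable R : realType.
Variable M : mechanism R.
Hypotheses (hM : is_randomized_mech M) (hIR : individually_rational_in_expectation M)
  (hT : truthful_in_expectation M) (hB : budget_feasible_in_expectation M).
Variables (n : nat) (B : R).
Hypothesis B0 : 0 < B.
Definition u1 : 'I_n -> R := fun _ => 1.
Lemma u1pos : pos_vec u1. Proof. by move=> i; rewrite /u1 ltr01. Qed.

Definition xx (c : 'I_n -> R) i := Exp (M n B u1 c) (fun o => ind R (i \in o.1)).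
Definition pp (c : 'I_n -> R) i := Exp (M n B u1 c) (fun o => o.2 i).

Lemma xx01 c i : nonneg_vec c -> 0 <= xx c i <= 1.
Proof.
move=> hc; have V := hM _ _ _ _ B0 u1pos hc.
apply/andP; split.
  rewrite -(@Exp_cst R n _ 0 V); apply: Exp_le => // o; by case/andP: (ind01 R (i \in o.1)).
rewrite -(@Exp_cst R n _ 1 V) /xx; apply: Exp_le => // o; by case/andP: (ind01 R (i \in o.1)).
Qed.

Lemma truthP c i cb : nonneg_vec c -> 0 <= cb ->
  pp (upd c i cb) i - c i * xx (upd c i cb) i <= pp c i - c i * xx c i.
Proof.
move=> hc hcb; have := hT _ _ _ _ i cb B0 u1pos hc hcb.
by rewrite /seller_util !Exp_lin.
Qed.

Lemma irP c i : nonneg_vec c -> c i * xx c i <= pp c i.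
Proof. by move=> hc; apply: (hIR _ _ _ _ i B0 u1pos hc). Qed.

Lemma budgetP c : nonneg_vec c -> \sum_i pp c i <= B.
Proof. by move=> hc; have := hB _ _ _ _ B0 u1pos hc; rewrite Exp_sum. Qed.

Lemma euP c : exp_utility M B u1 c = \sum_i xx c i.
Proof.
rewrite /exp_utility -Exp_sum /Exp; apply: eq_bigr => o _; congr (_ * _).
rewrite big_mkcond /=; apply: eq_bigr => i _.
by rewrite /u1 /ind; case: (i \in _).
Qed.

Variable m : nat.
Hypothesis m0 : (0 < m)%N.

Definition qI (k : 'I_m.+1) : R := qg R m k.
Definition prof (f : {ffun 'I_n -> 'I_m.+1}) : 'I_n -> R := fun i => tg R m (f i).

Lemma qI1 : \sum_k qI k = 1.
Proof. exact: sum_qg1. Qed.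
Lemma qI0 k : 0 <= qI k.
Proof. exact: qg_ge0. Qed.
Lemma tgI01 (k : 'I_m.+1) : 0 <= tg R m k <= 1.
Proof. by apply: tg01 => //; rewrite -ltnS. Qed.
Lemma prof_nn f : nonneg_vec (prof f).
Proof. by move=> i; case/andP: (tgI01 (f i)). Qed.

Lemma prof_set_i f i k : (k <= m)%N -> prof (setf n _ f i (inord k)) i = tg R m k.
Proof. by move=> km; rewrite /prof setf_i inordK. Qed.

Lemma prof_upd f i k : (k < m)%N ->
  prof (setf n _ f i (inord k.+1)) = upd (prof (setf n _ f i (inord k))) i (tg R m k.+1).
Proof.
move=> km; apply: funext => j; rewrite /prof /upd !ffunE.
by case: eqP => // _; rewrite inordK.
Qed.

Lemma seller_bound i :
  EE R n _ qI (fun f => xx (prof f) i) <=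
  qg R m 0 + mu R * EE R n _ qI (fun f => pp (prof f) i).
Proof.
rewrite (KEY _ _ _ _ qI1 i) [X in _ <= _ + _ * X](KEY _ _ _ _ qI1 i).
set X := fun k : nat => EE R n _ qI (fun f => xx (prof (setf n _ f i (inord k))) i).
set P := fun k : nat => EE R n _ qI (fun f => pp (prof (setf n _ f i (inord k))) i).
have -> : \sum_(k : 'I_m.+1) qI k * EE R n _ qI (fun f => xx (prof (setf n _ f i k)) i)
   = \sum_(k < m.+1) qg R m k * X k.
  by apply: eq_bigr => k _; rewrite /X inord_val.
have -> : \sum_(k : 'I_m.+1) qI k * EE R n _ qI (fun f => pp (prof (setf n _ f i k)) i)
   = \sum_(k < m.+1) qg R m k * P k.
  by apply: eq_bigr => k _; rewrite /P inord_val.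
apply: (@chain_lemma R m (tg R m) (qg R m) (Qg R m) P X (mu R)).
- exact/ltW/mu_gt0.
- exact: tg0.
- exact: Qg0.
- exact: QgS.
- exact: Qg_ge0.
- exact: qg_id.
- move=> k km; rewrite /P /X -!EEZ -!EEB; apply: EE_le; first exact: qI0.
  move=> f.
  have hc := prof_nn (setf n _ f i (inord k)).
  have hcb : 0 <= tg R m k.+1 by case/andP: (@tg01 R m m0 k.+1 km).
  have := truthP _ i _ hc hcb; rewrite prof_set_i ?(ltnW km) // -(prof_upd f i k km).
  done.
- apply: le_trans (_ : EE R n _ qI (fun f => tg R m m * xx (prof (setf n _ f i (inord m))) i) <= _).
    by rewrite EEZ /X.
  apply: EE_le; first exact: qI0.
  move=> f; have := irP _ i (prof_nn (setf n _ f i (inord m))).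
  by rewrite prof_set_i.
- exact: qg_ge0.
- rewrite /X -(EE1 R n _ _ qI1); apply: EE_le; first exact: qI0.
  by move=> f; case/andP: (xx01 _ i (prof_nn (setf n _ f i (inord 0)))).
Qed.

Lemma total_bound :
  EE R n _ qI (fun f => \sum_i xx (prof f) i) <= n%:R * qg R m 0 + mu R * B.
Proof.
rewrite EE_sum.
apply: le_trans (_ : \sum_i (qg R m 0 + mu R * EE R n _ qI (fun f => pp (prof f) i)) <= _).
  by apply: ler_sum => i _; apply: seller_bound.
rewrite big_split /=; apply: lerD; first by rewrite sumr_const card_ord mulr_natl.
rewrite -mulr_sumr; apply: ler_wpM2l; first exact/ltW/mu_gt0.
rewrite -EE_sum -[X in _ <= X](EEC R n _ _ qI1 B).
apply: EE_le; first exact: qI0.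
by move=> f; apply: budgetP; apply: prof_nn.
Qed.

Definition Ecg : R := Ec R _ qI (fun k => tg R m k).

Lemma Ecg01 : 0 <= Ecg <= 1.
Proof. exact: (Ec01 _ _ _ qI1 qI0 _ tgI01). Qed.

Lemma var_bound :
  EE R n _ qI (fun f => (\sum_i prof f i - n%:R * Ecg) ^+ 2) <= n%:R.
Proof. exact: (variance _ _ _ _ qI1 qI0 _ tgI01). Qed.

End Mech.


Lemma Ustar_ge0 (R : realType) n (B : R) (u c : 'I_n -> R) : 0 <= B -> 0 <= Ustar B u c.
Proof.
move=> B0; rewrite /Ustar (bigD1 set0) /=; last by rewrite big_set0.
by rewrite le_max big_set0 lexx.
Qed.

Lemma Ustar_all (R : realType) n (B : R) (u c : 'I_n -> R) :
  \sum_i c i <= B -> \sum_i u i <= Ustar B u c.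
Proof.
have E : forall F : 'I_n -> R, \sum_(i in [set: 'I_n]) F i = \sum_i F i.
  by move=> F; apply: eq_bigl => i; rewrite in_setT.
move=> H; rewrite /Ustar (bigD1 setT) /=.
  by rewrite le_max E lexx.
by rewrite E.
Qed.

Lemma cmax_le1 (R : realType) n (c : 'I_n -> R) : (forall i, c i <= 1) -> cmax c <= 1.
Proof.
move=> H; rewrite /cmax; apply: (big_ind (fun x => x <= 1)) => //.
  by move=> x y hx hy; rewrite ge_max hx hy.
Qed.

Theorem theorem2 (R : realType) :
  ~ exists (M : mechanism R) (alpha theta0 : R),
      [/\ is_randomized_mech M,
          individually_rational_in_expectation M,
          truthful_in_expectation M &
          budget_feasible_in_expectation M] /\
      [/\ 1 - (expR 1)^-1 < alpha,
          0 < theta0 &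
          forall (n : nat) (B : R) (u c : 'I_n -> R),
            0 < B -> pos_vec u -> nonneg_vec c ->
            cmax c / B <= theta0 ->
            alpha * Ustar B u c <= exp_utility M B u c].
Proof.
case=> M [al [th [[hM hIR hT hB] [hal hth hA]]]].
rewrite -expRN in hal.
have e0 : 0 < expR (-1) :> R := expR_gt0 _.
have e1 := em1_lt1 R.
set e := expR (-1) in hal e0 e1.
set g := al - (1 - e).
have g0 : 0 < g by rewrite /g; lra.
set d := g / 4.
have d0 : 0 < d by rewrite /d; lra.
have d4 : d * 4 = g by rewrite /d; field.
pose m := (Num.Def.archi_bound (4 / g)).+1.
have m0 : (0 < m)%N by [].
have hm : 4 / g < m%:R.
  have := @archi_boundP R (4 / g); rewrite divr_ge0 ?ler0n ?ltW //.
  move=> /(_ isT) h; apply: lt_le_trans h _; rewrite ler_nat /m; exact: leqnSn.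
have hb : 1 / (m.+1)%:R < d.
  have m1 : 0 < (m.+1)%:R :> R by rewrite ltr0n.
  rewrite ltr_pdivrMr //.
  have kg : 4 / g * g = 4 by field; apply: lt0r_neq0.
  rewrite -[(m.+1)%:R]natr1.
  set k := 4 / g in hm kg *; set mm := m%:R in hm *.
  rewrite -d4 in kg g0. nra.
set X := 1 / (th * d) + al / (d * d * d).
have X0 : 0 <= X.
  rewrite /X; apply: addr_ge0; apply: divr_ge0; try apply: mulr_ge0; try lra.
  all: try (apply: mulr_ge0; lra).
pose n := (Num.Def.archi_bound X).+1.
have hn : X < n%:R.
  have := @archi_boundP R X X0 => h; apply: lt_le_trans h _; rewrite ler_nat /n; exact: leqnSn.
have n0 : 0 < n%:R :> R by rewrite ltr0n.
set N := n%:R in hn n0 *.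
set Ec := Ecg R m.
have Ec01 := Ecg01 R m m0; rewrite -/Ec in Ec01.
move/andP: Ec01 => [Ec0 Ec1].
set B := N * (Ec + d).
have B0 : 0 < B by rewrite /B; apply: mulr_gt0 => //; lra.
have hXth : 1 / (th * d) < N.
  apply: le_lt_trans hn; rewrite /X lerDl; apply: divr_ge0; [lra|].
  by apply: mulr_ge0; [apply: mulr_ge0|]; lra.
have hXal : al / (d * d * d) < N.
  apply: le_lt_trans hn; rewrite /X lerDr; apply: divr_ge0; [lra|].
  by apply: mulr_ge0; lra.
have hcm : forall f, cmax (prof R n m f) / B <= th.
  move=> f.
  have c1 : cmax (prof R n m f) <= 1.
    by apply: cmax_le1 => i; rewrite /prof; case/andP: (tgI01 R m m0 (f i)).
  have hNd : 1 < N * (th * d) by rewrite -ltr_pdivrMr // mulr_gt0.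
  rewrite ler_pdivrMr //; apply: (le_trans c1).
  rewrite /B; nra.
have hAp : forall f, al * Ustar B (u1 R n) (prof R n m f) <= \sum_i xx R M n B (prof R n m f) i.
  move=> f; rewrite -euP; apply: hA; [done|exact: u1pos|exact: prof_nn|exact: hcm].
have TB := total_bound R M hM hIR hT hB n B B0 m m0.
have VB := var_bound R n m m0.
rewrite -/N -/Ec in VB.
have rho : qg R m 0 + mu R * Ec <= 1 - e + 1 / (m.+1)%:R := rho_bound R m m0.
set K := (N * d) ^+ 2.
have hK : 0 < K by rewrite /K exprn_gt0 // mulr_gt0.
set sq := fun f : {ffun 'I_n -> 'I_m.+1} => (\sum_i prof R n m f i - N * Ec) ^+ 2.
have PL : forall f, N - N / K * sq f <= Ustar B (u1 R n) (prof R n m f).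
  move=> f; rewrite /sq; set S := \sum_i prof R n m f i.
  have U0 := @Ustar_ge0 R n B (u1 R n) (prof R n m f) (ltW B0).
  have NK0 : 0 <= N / K by apply: divr_ge0; lra.
  case: (lerP S B) => hS.
    have := @Ustar_all R n B (u1 R n) _ hS.
    rewrite /u1 sumr_const card_ord -/N => h.
    have : 0 <= N / K * (S - N * Ec) ^+ 2 by apply: mulr_ge0 => //; apply: sqr_ge0.
    lra.
  have sqK : K <= (S - N * Ec) ^+ 2.
    rewrite /K; move: hS; rewrite /B => hS.
    have h1 : N * d <= S - N * Ec by lra.
    have h2 : 0 <= N * d by apply: mulr_ge0; lra.
    rewrite !expr2; nra.
  have : N / K * K <= N / K * (S - N * Ec) ^+ 2 by apply: ler_wpM2l.
  have -> : N / K * K = N by field; apply: lt0r_neq0.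
  lra.
have L1 : N - N / K * N <= EE R n _ (qI R m) (fun f => Ustar B (u1 R n) (prof R n m f)).
  apply: le_trans (_ : EE R n _ (qI R m) (fun f => N - N / K * sq f) <= _); last first.
    by apply: EE_le; [exact: qI0|exact: PL].
  rewrite EEB (EEC R n _ _ (qI1 R m m0) N) EEZ lerD2l lerN2.
  apply: ler_wpM2l => //; apply: divr_ge0; lra.
have L2 : al * EE R n _ (qI R m) (fun f => Ustar B (u1 R n) (prof R n m f))
   <= EE R n _ (qI R m) (fun f => \sum_i xx R M n B (prof R n m f) i).
  by rewrite -EEZ; apply: EE_le; [exact: qI0|exact: hAp].
have al0 : 0 <= al by lra.
have L3 : al * (N - N / K * N) <= N * qg R m 0 + mu R * B.
  apply: le_trans TB; apply: le_trans L2; exact: ler_wpM2l.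
have nK : N / K * N = 1 / (d * d).
  by rewrite /K; field; apply/andP; split; apply: lt0r_neq0.
rewrite nK /B /mu -/e in L3.
have R1 : N * (qg R m 0 + (1 - e) * Ec) <= N * (1 - e + 1 / (m.+1)%:R).
  by apply: ler_wpM2l; [lra|rewrite /mu -/e in rho].
have R3 : N * (1 / (m.+1)%:R) < N * d by rewrite ltr_pM2l.
have R4 : al / (d * d) < N * d.
  have -> : al / (d * d) = al / (d * d * d) * d.
    by field; rewrite ?(lt0r_neq0 d0).
  by rewrite ltr_pM2r.
have R5 : 0 < N * d by apply: mulr_gt0.
have R2 : (1 - e) * (N * d) <= N * d by nra.
move: L3 R1 R3 R4 R5 R2.
set q0 := qg R m 0; set b := 1 / (m.+1)%:R.
set Nd := N * d; set Nb := N * b; set aK := 1 / (d * d).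
have -> : al / (d * d) = al * aK by rewrite /aK mul1r.
move=> L3 R1 R3 R4 R5 R2.
have E1 : N * q0 + (1 - e) * (N * (Ec + d)) = N * (q0 + (1 - e) * Ec) + (1 - e) * Nd by rewrite /Nd; ring.
have E2 : N * (1 - e + b) = N * (1 - e) + Nb by rewrite /Nb; ring.
have E3 : al = g + (1 - e) by rewrite /g; ring.
have E4 : g * N = 4 * Nd by rewrite /Nd -d4; ring.
rewrite E1 in L3; rewrite E2 in R1.
move: L3; rewrite mulrBr => L3.
have E5 : al * N = g * N + (1 - e) * N by rewrite E3; ring.
have E6 : N * (1 - e) = (1 - e) * N by ring.
lra.
Qed.
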